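(* Let $M$ be a finite monoid with identity $1$. (i) If $M$ is a group, then $\sigma_m(M)=\sigma_m^*(M)=\sigma_s(M)=\sigma_g(M)$. (ii) If $S=M-\{1\}$ is a subsemigroup of $M$ which is a group, then $\sigma_m^*(M)=\sigma_s(M)=2$ and $\sigma_m(M)=\sigma_g(S)$. (iii) If $S=M-\{1\}$ is a subsemigroup of $M$ which is monogenic but not a group, then $\sigma_s(M)=2$ and $\sigma_m^*(M)=\sigma_m(M)=\infty$. (iv) Otherwise, $\sigma_m(M)=\sigma_m^*(M)=\sigma_s(M)=2$.
   Context: A subsemigroup is a nonempty subset closed under the operation; monogenic means generated as a semigroup by a single element. For a monoid $M$: a submonoid is a subsemigroup containing the identity of $M$; a monoidal subsemigroup is a subsemigroup that is a monoid in its own right (identity possibly different from that of $M$). $\sigma_s$, $\sigma_m$, $\sigma_m^*$, $\sigma_g$ denote the least positive integer $n$ such that the structure is the union of $n$ proper subsemigroups, proper submonoids, proper monoidal subsemigroups, respectively proper subgroups (for a group), or $\infty$ if no such finite $n$ exists. *)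

(* Defs.v *)
From mathcomp Require Import all_boot.
Set Implicit Arguments. Unset Strict Implicit. Unset Printing Implicit Defensive.

Section Defs.
Variables (T : finType) (op : T -> T -> T).

Definition closed (A : {set T}) : Prop :=
  forall x y, x \in A -> y \in A -> op x y \in A.

Definition subsemigroup (X A : {set T}) : Prop :=
  A \subset X /\ A != set0 /\ closed A.

Definition is_identity_on (A : {set T}) (f : T) : Prop :=
  f \in A /\ forall x, x \in A -> op f x = x /\ op x f = x.

Definition is_monoid_on (A : {set T}) : Prop :=
  closed A /\ exists f, is_identity_on A f.

Definition is_group_on (A : {set T}) : Prop :=
  closed A /\ exists f, is_identity_on A f /\
    forall x, x \in A -> exists y, y \in A /\ op x y = f /\ op y x = f.

(* positive powers: pw x n = x^(n+1) *)
Definition pw (x : T) (n : nat) : T := iter n (op x) x.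

Definition monogenic_on (A : {set T}) : Prop :=
  exists x, x \in A /\ forall y, y \in A <-> exists n, y = pw x n.

Definition submonoid (e : T) (A : {set T}) : Prop :=
  subsemigroup setT A /\ e \in A.

Definition monoidal_subsemigroup (A : {set T}) : Prop :=
  subsemigroup setT A /\ is_monoid_on A.

Definition subgroup_of (X A : {set T}) : Prop :=
  A \subset X /\ is_group_on A.

Definition covers (P : {set T} -> Prop) (U : {set T}) (n : nat) : Prop :=
  exists F : seq {set T}, size F = n /\ (forall A, A \in F -> P A) /\
    \bigcup_(A <- F) A = U.

(* covering number: Some n = least positive n with a cover, None = infinity *)
Definition sigma_is (P : {set T} -> Prop) (U : {set T}) (k : option nat) : Prop :=
  match k with
  | Some n => 0 < n /\ covers P U n /\ forall m, 0 < m -> m < n -> ~ covers P U m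
  | None => forall n, 0 < n -> ~ covers P U n
  end.

Definition sigma_s_is (k : option nat) : Prop :=
  sigma_is (fun A => subsemigroup setT A /\ A != setT) setT k.
Definition sigma_m_is (e : T) (k : option nat) : Prop :=
  sigma_is (fun A => submonoid e A /\ A != setT) setT k.
Definition sigma_mstar_is (k : option nat) : Prop :=
  sigma_is (fun A => monoidal_subsemigroup A /\ A != setT) setT k.
Definition sigma_g_is (X : {set T}) (k : option nat) : Prop :=
  sigma_is (fun A => subgroup_of X A /\ A != X) X k.

End Defs.

(* Main.v *)
From Stdlib Require Import Classical ClassicalEpsilon.
Require Import Defs.
From mathcomp Require Import all_boot.
Set Implicit Arguments. Unset Strict Implicit. Unset Printing Implicit Defensive.

Definition pdec (P : Prop) : bool := if excluded_middle_informative P then true else false.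
Lemma pdecP (P : Prop) : pdec P <-> P.
Proof. rewrite /pdec; case: excluded_middle_informative => //; split=> //. Qed.

Section Gen.
Variable T : finType.

Lemma in_bigcup (F : seq {set T}) x :
  x \in \bigcup_(A <- F) A <-> exists A, A \in F /\ x \in A.
Proof.
elim: F => [|A F IH]; first by rewrite big_nil in_set0; split=> // -[A []].
rewrite big_cons in_setU; split.
  case/orP=> [xA|/IH [B [BF xB]]]; first by exists A; rewrite inE eqxx.
  by exists B; rewrite inE BF orbT.
move=> [B []]; rewrite inE => /orP [/eqP -> -> //|BF xB].
by apply/orP; right; apply/IH; exists B.
Qed.

Lemma covers_mono (P Q : {set T} -> Prop) U n :
  (forall A, P A -> Q A) -> covers P U n -> covers Q U n.
Proof. by move=> PQ [F [sF [PF uF]]]; exists F; split=> //; split=> // A /PF /PQ. Qed.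

Lemma sigma_ext (P Q : {set T} -> Prop) U k :
  (forall A, P A <-> Q A) -> sigma_is P U k -> sigma_is Q U k.
Proof.
move=> PQ; case: k => [n|] /=.
  move=> [n0 [c m]]; split=> //; split; first by apply: covers_mono c => A /PQ.
  by move=> m' m0 lt cQ; apply: (m m' m0 lt); apply: covers_mono cQ => A /PQ.
by move=> h n n0 cQ; apply: (h n n0); apply: covers_mono cQ => A /PQ.
Qed.

Lemma sigma_exists (P : {set T} -> Prop) U : exists k, sigma_is P U k.
Proof.
case: (classic (exists n, 0 < n /\ covers P U n)) => [ex|nex]; last first.
  by exists None => n n0 c; apply: nex; exists n.
have ex' : exists n, pdec (0 < n /\ covers P U n) by case: ex => n h; exists n; apply/pdecP.
exists (Some (ex_minn ex')); case: ex_minnP => n /pdecP [n0 c] mn; do 2!split => //.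
by move=> m m0 lt cm; have := mn m (proj2 (pdecP _) (conj m0 cm)); rewrite leqNgt lt.
Qed.

Lemma covers2 (P : {set T} -> Prop) U A B :
  P A -> P B -> A :|: B = U -> covers P U 2.
Proof.
move=> PA PB AB; exists [:: A; B]; split=> //; split.
  by move=> C; rewrite !inE => /orP [/eqP->|/eqP->].
by rewrite !big_cons big_nil setU0.
Qed.

Lemma sigma2 (P : {set T} -> Prop) U A B :
  (forall C, P C -> C != U) -> P A -> P B -> A :|: B = U -> sigma_is P U (Some 2).
Proof.
move=> prop PA PB AB; split=> //; split; first exact: covers2 PA PB AB.
move=> m m0 lt [F [sF [PF uF]]]; have m1 : m = 1 by case: m m0 lt sF => [|[]].
rewrite m1 in sF; case: F sF PF uF => [|C [|]] //= _ PF; rewrite big_cons big_nil setU0 => CU.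
by move: (prop C (PF C (mem_head _ _))); rewrite CU eqxx.
Qed.

End Gen.

Section Alg.
Variable T : finType.
Variable op : T -> T -> T.
Hypothesis opA : forall x y z, op x (op y z) = op (op x y) z.

Lemma pw_add x n m : op (pw op x n) (pw op x m) = pw op x (n + m).+1.
Proof.
elim: n => [|n IH] //=.
by rewrite /pw /= -/(pw op x n) -opA IH.
Qed.

Lemma pw_in (A : {set T}) x n : Defs.closed op A -> x \in A -> pw op x n \in A.
Proof.
move=> cA xA; elim: n => [|n IH] //=.
by rewrite /pw /= -/(pw op x n); apply: cA.
Qed.

Definition gen x := [set y | pdec (exists n, y = pw op x n)].

Lemma in_gen x y : y \in gen x <-> exists n, y = pw op x n.
Proof. by rewrite inE; apply: pdecP. Qed.

Lemma gen_closed x : Defs.closed op (gen x).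
Proof.
move=> a b /in_gen [n ->] /in_gen [m ->]; apply/in_gen; exists (n + m).+1.
exact: pw_add.
Qed.

Lemma gen_sub (A : {set T}) x : Defs.closed op A -> x \in A -> gen x \subset A.
Proof. by move=> cA xA; apply/subsetP => y /in_gen [n ->]; apply: pw_in. Qed.

Lemma x_in_gen x : x \in gen x.
Proof. by apply/in_gen; exists 0. Qed.

Lemma surj_in (B : {set T}) (g : T -> T) :
  {in B &, injective g} -> (forall t, t \in B -> g t \in B) ->
  forall y, y \in B -> exists2 t, t \in B & g t = y.
Proof.
move=> inj gB y yB.
have sub : g @: B \subset B by apply/subsetP => z /imsetP [t tB ->]; apply: gB.
have eq : g @: B = B by apply/eqP; rewrite eqEcard sub (card_in_imset inj) leqnn.
have : y \in g @: B by rewrite eq.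
by case/imsetP => t tB ->; exists t.
Qed.

Lemma subgrp (X B : {set T}) :
  is_group_on op X -> B \subset X -> B != set0 -> Defs.closed op B -> is_group_on op B.
Proof.
rewrite /is_group_on /is_identity_on; move=> [cX [f [[fX idf] inv]]] BX /set0Pn [a aB] cB.
have XB : forall t, t \in B -> t \in X by move=> t; apply: (subsetP BX).
have cancel : forall x t t', x \in X -> t \in X -> t' \in X -> op x t = op x t' -> t = t'.
  move=> x t t' xX tX t'X h; have [x' [x'X [_ x'x]]] := inv x xX.
  by rewrite -(proj1 (idf t tX)) -(proj1 (idf t' t'X)) -x'x -!opA h.
have surjx : forall x y, x \in B -> y \in B -> exists2 t, t \in B & op x t = y.
  move=> x y xB yB; apply: surj_in => //; last by move=> t tB; apply: cB.
  by move=> t t' tB t'B; apply: cancel; apply: XB.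
have fB : f \in B.
  have [t tB h] := surjx a a aB aB.
  have := cancel a t f (XB _ aB) (XB _ tB) fX; rewrite (proj2 (idf a (XB _ aB))) => /(_ h).
  by move=> <-.
split=> //; exists f; split; first by split=> // x /XB /idf.
move=> x xB; have [t tB h] := surjx x f xB fB; exists t; split=> //; split=> //.
have [x' [x'X [xx' x'x]]] := inv x (XB _ xB).
have -> : t = x'.
  by rewrite -(proj1 (idf t (XB _ tB))) -x'x -opA h (proj2 (idf x' x'X)).
done.
Qed.

Lemma mono_grp (S : {set T}) :
  Defs.closed op S -> monogenic_on op S -> is_monoid_on op S -> is_group_on op S.
Proof.
move=> cS [x [xS genS]] [_ [f [fS idf]]].
split=> //; exists f; split; first by split.
have inS : forall n, pw op x n \in S by move=> n; apply: pw_in.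
pose inv z := exists y, y \in S /\ op z y = f /\ op y z = f.
have invx : inv x.
  have [m fm] := (genS f).1 fS.
  case: m fm => [|m] fm.
    exists x; split=> //; rewrite fm /= in idf *.
    by have [-> _] := idf x xS.
  exists (pw op x m); split=> //; split.
    by rewrite fm.
  by rewrite fm -[x in op _ x]/(pw op x 0) pw_add addn0.
have invp : forall n, inv (pw op x n).
  elim=> [|n [y [yS [h1 h2]]]] //=.
  have [x' [x'S [h3 h4]]] := invx.
  exists (op y x'); split; first by apply: cS.
  rewrite /pw /= -/(pw op x n); split.
    by rewrite -opA [op (pw op x n) _]opA h1 (proj1 (idf x' x'S)).
  by rewrite -opA [op x' _]opA h4 (proj1 (idf _ (inS n))).
by move=> z /genS [n ->]; apply: invp.
Qed.

End Alg.

Definition split2 (T : finType) (op : T -> T -> T) (S : {set T}) :=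
  exists A B : {set T}, A \subset S /\ B \subset S /\ A != S /\ B != S /\
    Defs.closed op A /\ Defs.closed op B /\ A :|: B = S.

Section Right.
Variable T : finType.
Variable op : T -> T -> T.
Hypothesis opA : forall x y z, op x (op y z) = op (op x y) z.
Variable S : {set T}.
Hypothesis cS : Defs.closed op S.

Definition rs x := [set op x y | y in S].

Lemma rs_sub x : x \in S -> rs x \subset S.
Proof. by move=> xS; apply/subsetP => z /imsetP [y yS ->]; apply: cS. Qed.

Lemma rs_mul x y : y \in S -> rs (op x y) \subset rs x.
Proof.
move=> yS; apply/subsetP => z /imsetP [w wS ->]; rewrite -opA.
by apply/imsetP; exists (op y w) => //; apply: cS.
Qed.

Lemma rs_mulE x y : y \in S -> rs y = S -> rs (op x y) = rs x.
Proof.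
move=> yS ry; apply/eqP; rewrite eqEsubset rs_mul //=.
apply/subsetP => z /imsetP [w wS ->].
have : w \in rs y by rewrite ry.
by case/imsetP => v vS ->; rewrite opA; apply/imsetP; exists v.
Qed.

Lemma right_case :
  (forall z, z \in S -> exists a b, a \in S /\ b \in S /\ op a b = z) ->
  (exists2 x, x \in S & rs x != S) -> split2 op S.
Proof.
move=> SS [x0 x0S rx0].
pose Ur := [set x in S | rs x == S].
case: (set_0Vmem Ur) => [Ur0|[u uU]].
  pose RI := [pred B : {set T} | (B \subset S) && (B != S) &&
                 [forall b in B, forall y in S, op b y \in B]].
  have RIx0 : RI (rs x0).
    rewrite /RI /= rs_sub // rx0 /=; apply/forallP => b; apply/implyP => /imsetP [w wS ->].
    apply/forallP => y; apply/implyP => yS; rewrite -opA; apply/imsetP; exists (op w y) => //.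
    exact: cS.
  case: (arg_maxnP (fun B : {set T} => #|B|) RIx0) => B /andP [/andP [BS BnS] BI] maxB.
  have [z zS zB] : exists2 z, z \in S & z \notin B.
    apply/exists_inP; apply: contraR BnS => h; rewrite eqEsubset BS /=.
    by apply/subsetP => z zS; apply: contraR h => zB; apply/exists_inP; exists z.
  have [a [b [aS [bS abz]]]] := SS z zS.
  have raS : rs a != S.
    apply/negP => /eqP h; have : a \in Ur by rewrite inE aS h eqxx.
    by rewrite Ur0 inE.
  have RIa : forall c, c \in S -> forall b y, b \in rs c -> y \in S -> op b y \in rs c.
    move=> c cS' b' y /imsetP [w wS ->] yS; rewrite -opA; apply/imsetP; exists (op w y) => //.
    exact: cS.
  have BI' : forall b y, b \in B -> y \in S -> op b y \in B.
    by move=> b' y bB yS; move/forall_inP: BI => /(_ b' bB) /forall_inP; apply.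
  have ABS : rs a :|: B = S.
    apply/eqP; apply: contraT => ne.
    have : RI (rs a :|: B).
      rewrite /RI /= subUset rs_sub // BS ne /=.
      apply/forall_inP => c; rewrite inE => /orP [cA|cB]; apply/forall_inP => y yS; rewrite inE.
        by rewrite RIa.
      by rewrite BI' ?orbT.
    move/maxB => HH; have : #|B| < #|rs a :|: B| by apply: proper_card; rewrite properE subsetUr /=; apply/subsetPn; exists z => //; rewrite inE -abz; apply/orP; left; apply/imsetP; exists b.
    by rewrite ltnNge; move: HH => /= ->.
  exists (rs a), B; do !split => //.
  - exact: rs_sub.
  - by move=> p q pA qA; apply: RIa => //; apply: (subsetP (rs_sub aS)).
  - by move=> p q pB qB; apply: BI' => //; apply: (subsetP BS).
have UrS : Ur \subset S by apply/subsetP => w; rewrite inE => /andP [].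
exists Ur, (S :\: Ur); do !split => //.
- exact: subsetDl.
- apply: contra rx0 => /eqP e; have : x0 \in Ur by rewrite e.
  by rewrite inE => /andP [].
- apply/negP => /eqP e; have : u \in S :\: Ur by rewrite e; move: uU; rewrite inE => /andP [].
  by rewrite inE uU.
- move=> p q; rewrite !inE => /andP [pS /eqP rp] /andP [qS /eqP rq].
  by rewrite cS //= rs_mulE // rp.
- move=> p q; rewrite !inE => /andP [pU pS] /andP [qU qS]; rewrite cS // andbT.
  apply: contra pU => /eqP e; rewrite pS /=; rewrite eqEsubset rs_sub //=.
  by rewrite -{1}e; apply: rs_mul.
- apply/setP => w; rewrite !inE; case: (w \in S); case: (rs w == S) => //.
Qed.
End Right.

Section Core.
Variable T : finType.
Variable op : T -> T -> T.
Hypothesis opA : forall x y z, op x (op y z) = op (op x y) z.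

Lemma core (S : {set T}) : Defs.closed op S -> S != set0 ->
  ~ is_group_on op S -> ~ monogenic_on op S -> split2 op S.
Proof.
move=> cS S0 ng nm.
case: (classic (forall z, z \in S -> exists a b, a \in S /\ b \in S /\ op a b = z)) => [SS|nSS].
  case: (classic (exists2 x, x \in S & rs op S x != S)) => [ex|nr].
    exact: right_case.
  have opA' : forall x y z, (fun a b => op b a) x ((fun a b => op b a) y z) =
                (fun a b => op b a) ((fun a b => op b a) x y) z.
    by move=> x y z /=; rewrite opA.
  have cS' : Defs.closed (fun a b => op b a) S by move=> x y xS yS; apply: cS.
  have SS' : forall z, z \in S -> exists a b, a \in S /\ b \in S /\ (fun a b => op b a) a b = z.
    by move=> z /SS [a [b [aS [bS h]]]]; exists b, a.
  case: (classic (exists2 x, x \in S & rs (fun a b => op b a) S x != S)) => [ex|nl].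
    have [A [B [AS [BS [AnS [BnS [cA [cB AB]]]]]]]] := right_case opA' cS' SS' ex.
    by exists A, B; do !split => //; move=> p q pA qA; [apply: cA|apply: cB].
  exfalso; apply: ng.
  have hr : forall x, x \in S -> rs op S x = S.
    by move=> x xS; apply/eqP; apply: contraT => h; exfalso; apply: nr; exists x.
  have hl : forall x, x \in S -> rs (fun a b => op b a) S x = S.
    by move=> x xS; apply/eqP; apply: contraT => h; exfalso; apply: nl; exists x.
  have [a aS] := set0Pn _ S0.
  have : a \in rs op S a by rewrite hr.
  case/imsetP => f fS af.
  have : a \in rs (fun a b => op b a) S a by rewrite hl.
  case/imsetP => g gS ga.
  have fr : forall b, b \in S -> op b f = b.
    move=> b bS; have : b \in rs (fun a b => op b a) S a by rewrite hl.
    by case/imsetP => y yS ->; rewrite -opA -af.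
  have gl : forall b, b \in S -> op g b = b.
    move=> b bS; have : b \in rs op S a by rewrite hr.
    by case/imsetP => y yS ->; rewrite opA -ga.
  have fg : f = g by rewrite -[RHS]fr // gl.
  split=> //; exists f; split; first by split=> // b bS; rewrite fr // fg gl.
  move=> x xS; have : f \in rs op S x by rewrite hr.
  case/imsetP => y yS xy.
  have : f \in rs (fun a b => op b a) S x by rewrite hl.
  case/imsetP => z zS zx.
  exists y; split=> //; split=> //.
  have -> : y = z by rewrite -[LHS]gl // -fg zx -opA -xy fr.
  by [].
have [x [xS nx]] : exists x, x \in S /\ forall a b, a \in S -> b \in S -> op a b <> x.
  apply: NNPP => h; apply: nSS => z zS; apply: NNPP => nz; apply: h; exists z; split=> //.
  by move=> a b aS bS e; apply: nz; exists a, b.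
exists (S :\ x), (gen op x); do !split.
- exact: subsetDl.
- exact: gen_sub.
- apply/negP => /eqP e; have : x \in S :\ x by rewrite e.
  by rewrite !inE eqxx.
- apply/negP => /eqP e; apply: nm; exists x; split=> // y; rewrite -e; exact: in_gen.
- move=> p q; rewrite !inE => /andP [px pS] /andP [qx qS]; rewrite cS // andbT.
  by apply/eqP; apply: nx.
- exact: gen_closed.
- apply/setP => w; rewrite in_setU in_setD1; case: (boolP (w == x)) => [/eqP ->|wx] /=.
    by rewrite xS x_in_gen ?orbT.
  case: (boolP (w \in S)) => wS //=.
  by apply/negP => /(subsetP (gen_sub cS xS)); rewrite (negbTE wS).
Qed.
End Core.

Section Main.
Variable T : finType.
Variable op : T -> T -> T.
Variable e : T.
Hypothesis opA : forall x y z, op x (op y z) = op (op x y) z.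
Hypothesis op1x : forall x, op e x = x.
Hypothesis opx1 : forall x, op x e = x.

Lemma finv a b : op a b = e -> op b a = e.
Proof.
move=> ab.
have inj : {in [set: T] &, injective (op b)}.
  by move=> t t' _ _ h; rewrite -(op1x t) -(op1x t') -ab -!opA h.
have [c _ bc] := surj_in inj (fun t _ => in_setT (op b t)) (in_setT e).
have -> : a = c by rewrite -(opx1 a) -bc opA ab op1x.
exact: bc.
Qed.

Lemma closed_e (A : {set T}) : Defs.closed op A -> Defs.closed op (e |: A).
Proof.
move=> cA x y; rewrite !in_setU1 => /orP [/eqP->|xA] /orP [/eqP->|yA].
- by rewrite op1x eqxx.
- by rewrite op1x yA orbT.
- by rewrite opx1 xA orbT.
- by rewrite cA ?orbT.
Qed.

Lemma submonoid_e (A : {set T}) : Defs.closed op A -> submonoid op e (e |: A).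
Proof.
move=> cA; split; last by rewrite setU11.
split; first exact: subsetT.
split; last exact: closed_e.
by apply/set0Pn; exists e; rewrite setU11.
Qed.

Lemma prop_e (A : {set T}) : A \subset setT :\ e -> A != setT :\ e -> e |: A != setT.
Proof.
move=> AS AnS; have [s sS sA] : exists2 s, s \in setT :\ e & s \notin A.
  apply/exists_inP; apply: contraR AnS => h; rewrite eqEsubset AS /=.
  by apply/subsetP => s sS; apply: contraR h => sA; apply/exists_inP; exists s.
apply/negP => /eqP h; have : s \in e |: A by rewrite h.
by rewrite in_setU1 (negbTE sA) orbF; move: sS; rewrite !inE => /andP [/negbTE ->].
Qed.

Lemma sub_mstar (A : {set T}) : submonoid op e A -> monoidal_subsemigroup op A.
Proof.
move=> [sA eA]; split=> //; split; first by case: sA => _ [].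
by exists e; split=> // x _.
Qed.

Lemma all_two (A B : {set T}) : submonoid op e A -> A != setT -> submonoid op e B -> B != setT ->
  A :|: B = setT ->
  sigma_m_is op e (Some 2) /\ sigma_mstar_is op (Some 2) /\ sigma_s_is op (Some 2).
Proof.
move=> mA nA mB nB AB; split.
  by apply: (sigma2 (A := A) (B := B)) => // C [].
split.
  apply: (sigma2 (A := A) (B := B)) => //; first by move=> C [].
    by split=> //; apply: sub_mstar.
  by split=> //; apply: sub_mstar.
apply: (sigma2 (A := A) (B := B)) => //; first by move=> C [].
  by split=> //; case: mA.
by split=> //; case: mB.
Qed.

Lemma part4 : ~ is_group_on op setT ->
   ~ (subsemigroup op setT (setT :\ e) /\ (is_group_on op (setT :\ e) \/ monogenic_on op (setT :\ e))) ->
     sigma_m_is op e (Some 2) /\ sigma_mstar_is op (Some 2) /\ sigma_s_is op (Some 2).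
Proof.
move=> ngM nh.
pose U := [set x | pdec (exists y, op x y = e /\ op y x = e)].
have inU : forall x, x \in U <-> exists y, op x y = e /\ op y x = e.
  by move=> x; rewrite inE; apply: pdecP.
case: (classic (exists u, u \in U /\ u != e)) => [[u [uU ue]]|nu].
  have cU : Defs.closed op U.
    move=> x y /inU [x' [xx' x'x]] /inU [y' [yy' y'y]]; apply/inU; exists (op y' x'); split.
      by rewrite -opA (opA y) yy' op1x.
    by rewrite -opA (opA x') x'x op1x.
  have cB : Defs.closed op (~: U).
    move=> x y; rewrite !inE => xU yU; apply/negP => /(proj1 (pdecP _)) [z [h _]].
    move: h; rewrite -opA => /finv h; move/negP: xU; apply; apply/pdecP.
    by exists (op y z); split=> //; apply: finv.
  apply: (all_two (A := U) (B := e |: ~: U)).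
  - split; last by apply/inU; exists e; rewrite op1x.
    by split; [exact: subsetT|split=> //; apply/set0Pn; exists u].
  - apply/negP => /eqP h; apply: ngM; split; first by move=> ? ? _ _; exact: in_setT.
    exists e; split; first by split=> // x _.
    move=> x _; have /inU [y [? ?]] : x \in U by rewrite h.
    by exists y.
  - exact: submonoid_e.
  - apply/negP => /eqP h; have : u \in e |: ~: U by rewrite h.
    by rewrite in_setU1 (negbTE ue) inE uU.
  - by apply/setP => w; rewrite in_setU in_setU1 in_setC in_setT; case: (w \in U); rewrite ?orbT.

have Ue : forall u, u \in U -> u = e.
  by move=> u uU; apply: NNPP => ne; apply: nu; exists u; split=> //; apply/eqP.
have cS : Defs.closed op (setT :\ e).
  move=> x y; rewrite !inE !andbT => xe ye; apply/negP => /eqP h.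
  have : x \in U by apply/inU; exists y; split=> //; apply: finv.
  by move/Ue => /eqP; rewrite (negbTE xe).
have S0 : setT :\ e != set0.
  apply/negP => /eqP S0; apply: ngM; split; first by move=> ? ? _ _; exact: in_setT.
  have all_e : forall w, w = e.
    move=> w; apply/eqP; apply: contraT => we; have : w \in setT :\ e by rewrite !inE we.
    by rewrite S0 inE.
  exists e; split; first by split=> // x _.
  by move=> x _; exists e; rewrite op1x (all_e x).
have ssS : subsemigroup op setT (setT :\ e) by split; [exact: subsetT|split].
have [A [B [AS [BS [AnS [BnS [cA [cB AB]]]]]]]] :
    split2 op (setT :\ e).
  apply: core => //.
    by move=> h; apply: nh; split=> //; left.
  by move=> h; apply: nh; split=> //; right.
apply: (all_two (A := e |: A) (B := e |: B)).
- exact: submonoid_e.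
- exact: prop_e.
- exact: submonoid_e.
- exact: prop_e.
- by rewrite -setUUr AB setD1K // in_setT.
Qed.

Lemma part1 : is_group_on op setT ->
     exists k, sigma_m_is op e k /\ sigma_mstar_is op k /\
               sigma_s_is op k /\ sigma_g_is op setT k.
Proof.
move=> gM; have [cM [f [[_ idf] invf]]] := gM.
have fe : f = e by rewrite -(opx1 f) (proj1 (idf e (in_setT e))).
have idem : forall g, op g g = g -> g = e.
  move=> g gg; have [h [_ [_ hg]]] := invf g (in_setT g).
  by rewrite -fe -hg -{2}gg opA hg (proj1 (idf g (in_setT g))).
pose Ps := fun A : {set T} => subsemigroup op setT A /\ A != setT.
have key : forall A, Ps A -> is_group_on op A /\ e \in A.
  move=> A [[_ [A0 cA]] _]; have gA := subgrp opA gM (subsetT A) A0 cA.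
  split=> //; have [_ [g [[gA' idg] _]]] := gA.
  by rewrite -(idem g) // (proj1 (idg g gA')).
have [k sk] := sigma_exists Ps setT.
exists k; split; last split; last split.
- apply: sigma_ext sk => A; split.
    by move=> PA; split=> //; [split; [case: PA|exact: (key A PA).2]|case: PA].
  by move=> [[sA _] nA].
- apply: sigma_ext sk => A; split.
    move=> PA; split; last by case: PA.
    split; first by case: PA.
    by have [[cA [g [ig _]]] _] := key A PA; split=> //; exists g.
  by move=> [[sA _] nA].
- by [].
- apply: sigma_ext sk => A; split.
    by move=> PA; split; [split; [exact: subsetT|exact: (key A PA).1]|case: PA].
  move=> [[_ [cA [g [[gA _] _]]]] nA]; split=> //; split; first exact: subsetT.
  by split=> //; apply/set0Pn; exists g.
Qed.

Lemma S_fact (P : {set T} -> Prop) : (forall C, P C -> C != setT) ->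
  P [set e] -> P (setT :\ e) -> sigma_is P setT (Some 2).
Proof.
move=> prop Pe PS; apply: (sigma2 (A := [set e]) (B := setT :\ e)) => //.
by rewrite setD1K // in_setT.
Qed.

Lemma e_sub : subsemigroup op setT [set e].
Proof.
split; first exact: subsetT.
split; first by apply/set0Pn; exists e; rewrite inE.
by move=> x y; rewrite !inE => /eqP -> /eqP ->; rewrite op1x.
Qed.

Lemma e_ne : setT :\ e != set0 -> [set e] != setT.
Proof.
case/set0Pn => s; rewrite !inE andbT => se; apply/negP => /eqP h.
have : s \in [set e] by rewrite h.
by rewrite inE (negbTE se).
Qed.

Lemma S_ne : setT :\ e != setT.
Proof. apply/negP => /eqP h; have : e \in setT :\ e by rewrite h.
by rewrite !inE eqxx. Qed.

Lemma part3 : subsemigroup op setT (setT :\ e) -> monogenic_on op (setT :\ e) ->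
   ~ is_group_on op (setT :\ e) ->
     sigma_s_is op (Some 2) /\ sigma_mstar_is op None /\ sigma_m_is op e None.
Proof.
move=> sS mS ng; have [_ [S0 cS]] := sS.
split.
  apply: S_fact; first by move=> C [].
    by split; [exact: e_sub|exact: e_ne].
  by split; [exact: sS|exact: S_ne].
have [x [xS genS]] := mS.
have getA : forall F : seq {set T}, \bigcup_(A <- F) A = setT -> exists A, A \in F /\ x \in A.
  by move=> F uF; apply/in_bigcup; rewrite uF in_setT.
have SA : forall A : {set T}, Defs.closed op A -> x \in A -> setT :\ e \subset A.
  move=> A cA xA; apply/subsetP => y /genS [n ->]; exact: pw_in.
split.
  move=> n n0 [F [_ [PF uF]]]; have [A [AF xA]] := getA F uF.
  have [[[_ [_ cA]] mA] nA] := PF A AF.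
  have eA : e \notin A.
    apply: contra nA => eA; apply/eqP/setP => w; rewrite in_setT.
    case: (boolP (w == e)) => [/eqP -> //|we].
    by apply: (subsetP (SA A cA xA)); rewrite !inE we.
  have AS : A = setT :\ e.
    apply/eqP; rewrite eqEsubset SA // andbT; apply/subsetP => w wA; rewrite !inE andbT.
    by apply: contra eA => /eqP <-.
  by apply: ng; apply: mono_grp => //; rewrite -AS.
move=> n n0 [F [_ [PF uF]]]; have [A [AF xA]] := getA F uF.
have [[[_ [_ cA]] eA] nA] := PF A AF.
apply/negP: nA; apply/negPn/eqP/setP => w; rewrite in_setT.
case: (boolP (w == e)) => [/eqP -> //|we].
by apply: (subsetP (SA A cA xA)); rewrite !inE we.
Qed.

Lemma part2 : subsemigroup op setT (setT :\ e) -> is_group_on op (setT :\ e) ->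
     sigma_mstar_is op (Some 2) /\ sigma_s_is op (Some 2) /\
     exists k, sigma_m_is op e k /\ sigma_g_is op (setT :\ e) k.
Proof.
move=> sS gS; have [_ [S0 cS]] := sS.
split.
  apply: S_fact; first by move=> C [].
    split; last exact: e_ne.
    split; first exact: e_sub.
    split; first exact: (proj2 (proj2 e_sub)).
    exists e; split; first by rewrite inE.
    by move=> x; rewrite inE => /eqP ->; rewrite op1x.
  split; last exact: S_ne.
  by split=> //; split=> //; case: gS => _ [f [idf _]]; exists f.
split.
  apply: S_fact; first by move=> C [].
    by split; [exact: e_sub|exact: e_ne].
  by split; [exact: sS|exact: S_ne].
pose Pm := fun A : {set T} => submonoid op e A /\ A != setT.
pose Pg := fun A : {set T} => subgroup_of op (setT :\ e) A /\ A != setT :\ e.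
have [s sS'] := set0Pn _ S0.
have toM : forall n, 0 < n -> covers Pg (setT :\ e) n -> covers Pm setT n.
  move=> n n0 [F [sF [PF uF]]]; exists [seq e |: B | B <- F]; split; first by rewrite size_map.
  split.
    move=> A /mapP [B BF ->]; have [[BS [cB _]] nB] := PF B BF.
    by split; [apply: submonoid_e; exact: cB|exact: prop_e BS nB].
  apply/setP => w; rewrite in_setT; apply/in_bigcup.
  case: (boolP (w == e)) => [/eqP ->|we].
    case: F sF {PF uF} => [|B F] /=; first by move=> h; rewrite -h in n0.
    by move=> _; exists (e |: B); rewrite mem_head setU11.
  have : w \in \bigcup_(A <- F) A by rewrite uF !inE we.
  case/in_bigcup => B [BF wB]; exists (e |: B); split; first by apply/mapP; exists B.
  by rewrite in_setU1 wB orbT.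
have toG : forall n, covers Pm setT n -> exists m, 0 < m /\ m <= n /\ covers Pg (setT :\ e) m.
  move=> n [F [sF [PF uF]]].
  pose F' := [seq A :\ e | A <- F & A :\ e != set0].
  have inF' : forall w, w \in setT :\ e -> exists B, B \in F' /\ w \in B.
    move=> w wS; have : w \in \bigcup_(A <- F) A by rewrite uF in_setT.
    case/in_bigcup => A [AF wA]; exists (A :\ e); split.
      apply/mapP; exists A => //; rewrite mem_filter AF andbT.
      by apply/set0Pn; exists w; rewrite in_setD1 wA andbT; move: wS; rewrite !inE andbT.
    by rewrite in_setD1 wA andbT; move: wS; rewrite !inE andbT.
  exists (size F'); split.
    have [B [BF _]] := inF' s sS'; rewrite lt0n; apply/negP => /eqP /size0nil h.
    by rewrite h in BF.
  split; first by rewrite size_map size_filter -sF count_size.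
  exists F'; split=> //; split.
    move=> B /mapP [A]; rewrite mem_filter => /andP [B0 AF] ->.
    have [[[_ [_ cA]] eA] nA] := PF A AF.
    have BS : A :\ e \subset setT :\ e by apply: setSD; exact: subsetT.
    have cB : Defs.closed op (A :\ e).
      move=> x y; rewrite !in_setD1 => /andP [xe xA] /andP [ye yA]; rewrite cA // andbT.
      have : op x y \in setT :\ e by apply: cS; rewrite !inE andbT.
      by rewrite !inE andbT.
    split; first by split=> //; apply: (subgrp opA gS).
    apply: contra nA => /eqP h; apply/eqP; rewrite -(setD1K eA) h setD1K // in_setT.
  apply/setP => w; apply/idP/idP.
    move/in_bigcup => [B [/mapP [A _ ->] wB]]; move: wB; rewrite !inE => /andP [-> _] //.
  by move/inF' => h; apply/in_bigcup.
have [k sk] := sigma_exists Pm setT.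
exists k; split=> //.
case: k sk => [n|] /= sk; last first.
  by move=> n n0 cG; apply: (sk n n0); apply: toM.
have [n0 [cM mn]] := sk.
have [m [m0 [le cG]]] := toG n cM.
have mn' : m = n.
  apply/eqP; rewrite eqn_leq le /=; rewrite leqNgt; apply/negP => lt.
  by apply: (mn m m0 lt); apply: toM.
rewrite -mn'; split=> //; split=> // m1 m10 lt1 cG1.
by apply: (mn m1 m10); [rewrite -mn'|apply: toM].
Qed.

End Main.

Theorem mainTheorem19 (T : finType) (op : T -> T -> T) (e : T)
  (opA : forall x y z, op x (op y z) = op (op x y) z)
  (op1x : forall x, op e x = x) (opx1 : forall x, op x e = x) :
  let S := setT :\ e in
  (is_group_on op setT ->
     exists k, sigma_m_is op e k /\ sigma_mstar_is op k /\
               sigma_s_is op k /\ sigma_g_is op setT k) /\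
  (subsemigroup op setT S -> is_group_on op S ->
     sigma_mstar_is op (Some 2) /\ sigma_s_is op (Some 2) /\
     exists k, sigma_m_is op e k /\ sigma_g_is op S k) /\
  (subsemigroup op setT S -> monogenic_on op S -> ~ is_group_on op S ->
     sigma_s_is op (Some 2) /\ sigma_mstar_is op None /\ sigma_m_is op e None) /\
  (~ is_group_on op setT ->
   ~ (subsemigroup op setT S /\ (is_group_on op S \/ monogenic_on op S)) ->
     sigma_m_is op e (Some 2) /\ sigma_mstar_is op (Some 2) /\ sigma_s_is op (Some 2)).
Proof.
move=> S; split; first by apply: part1.
split; first by apply: part2.
split; first by apply: part3.
by apply: part4.
Qed.
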